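(* Let $m\ge2$ and let $f$ be the two-digit base-$m$ Kaprekar map on $X=\{0,\dots,m^2-1\}$. There exists a fixed set $K(x)$ with $|K(x)|=2$ if and only if $5\mid m+1$. In that case such a fixed set is unique.
   Context: For an integer $m\ge2$, $X=\{0,1,\dots,m^2-1\}$, each element written with exactly two base-$m$ digits (leading zeros allowed); $f(x)=D(x)-A(x)$ where $D(x)$ (resp. $A(x)$) has the digits of $x$ in nonincreasing (resp. nondecreasing) order. The step $S(x)$ is the least $s\ge0$ such that $f^{s+t}(x)=f^s(x)$ for some $t\ge1$; $T(x)$ is the least $t\ge1$ with $f^{S(x)+t}(x)=f^{S(x)}(x)$; the fixed set of $x$ is $K(x)=\{f^{S(x)+i}(x):0\le i<T(x)\}$. *)

(* Defs.v *)
From mathcomp Require Import all_boot.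
Set Implicit Arguments. Unset Strict Implicit. Unset Printing Implicit Defensive.

Definition kap (m x : nat) : nat :=
  let a := x %/ m in let b := x %% m in
  (maxn a b * m + minn a b) - (minn a b * m + maxn a b).

Definition kit (m s x : nat) : nat := iter s (kap m) x.

Definition periodic_from (m x s : nat) : Prop :=
  exists t, 0 < t /\ kit m (s + t) x = kit m s x.

Definition is_S (m x s : nat) : Prop :=
  periodic_from m x s /\ forall s', s' < s -> ~ periodic_from m x s'.

Definition is_T (m x s t : nat) : Prop :=
  0 < t /\ kit m (s + t) x = kit m s x /\
  forall t', 0 < t' -> t' < t -> kit m (s + t') x <> kit m s x.

(* K is (an enumeration of) the fixed set K(x) = {f^(S(x)+i)(x) : 0 <= i < T(x)} *)
Definition fixed_set (m x : nat) (K : seq nat) : Prop :=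
  exists s t, is_S m x s /\ is_T m x s t /\
    K = [seq kit m (s + i) x | i <- iota 0 t].

(* Main.v *)
Require Import Defs.
From mathcomp Require Import all_boot zify.

Lemma kapE m x : kap m x = (maxn (x %/ m) (x %% m) - minn (x %/ m) (x %% m)) * (m - 1).
Proof.
rewrite /kap /=; move: (x %/ m) (x %% m) => a b.
case: (leqP a b) => h.
- have [c ->] : exists c, b = a + c by exists (b - a); lia.
  rewrite addKn mulnDl mulnBr muln1; lia.
- have [c ->] : exists c, a = b + c by exists (a - b); lia.
  rewrite addKn mulnDl mulnBr muln1; lia.
Qed.

Lemma kapd m d : 1 <= d -> d <= m - 1 ->
  kap m (d * (m - 1)) = (maxn (d-1) (m-d) - minn (d-1) (m-d)) * (m - 1).
Proof.
move=> h1 h2; rewrite kapE.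
have e : d * (m-1) = (d-1) * m + (m - d) by rewrite mulnBr mulnBl; nia.
have hm : 0 < m by lia.
rewrite e divnMDl // modnMDl divn_small ?modn_small ?addn0 //; lia.
Qed.

Lemma kap_form m x : 0 < m -> x < m ^ 2 -> exists d, d <= m - 1 /\ kap m x = d * (m - 1).
Proof.
move=> hm hx; rewrite kapE.
have ha : x %/ m < m by rewrite ltn_divLR // -expnS.
have hb : x %% m < m by rewrite ltn_pmod.
exists (maxn (x %/ m) (x %% m) - minn (x %/ m) (x %% m)); split => //; clear hx; move: ha hb; move: (x %/ m) (x %% m) => a b; lia.
Qed.

Lemma kap_lt m x : 0 < m -> x < m ^ 2 -> kap m x < m ^ 2.
Proof.
move=> hm hx; have [d [hd ->]] := kap_form m x hm hx.
have : d * (m - 1) <= (m - 1) * (m - 1) by rewrite leq_mul2r hd orbT.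
rewrite expnS expn1; nia.
Qed.

Lemma kit_lt m n x : 0 < m -> x < m ^ 2 -> kit m n x < m ^ 2.
Proof.
move=> hm hx; elim: n => [|n IH] //; rewrite /kit iterS; exact: kap_lt m _ hm IH.
Qed.

Lemma kap0 m : kap m 0 = 0.
Proof. by rewrite kapE div0n mod0n. Qed.

Lemma gcase m d : 1 <= d -> d <= m - 1 ->
  (maxn (d-1) (m-d) - minn (d-1) (m-d)) + 2 * d = m + 1 \/
  (maxn (d-1) (m-d) - minn (d-1) (m-d)) + (m + 1) = 2 * d.
Proof.
move=> h1 h2; case: (leqP (d-1) (m-d)) => h; [left|right]; lia.
Qed.

Lemma cyc m p q : 2 <= m -> p < m ^ 2 -> q < m ^ 2 -> p != q ->
  kap m p = q -> kap m q = p ->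
  exists c, m + 1 = 5 * c /\
    ((p = c * (m-1) /\ q = (3 * c) * (m-1)) \/ (p = (3 * c) * (m-1) /\ q = c * (m-1))).
Proof.
move=> hm hp hq hpq ep eq.
have hm0 : 0 < m by lia.
have [dp [hdp edp]] := kap_form m p hm0 hp.
have [dq [hdq edq]] := kap_form m q hm0 hq.
rewrite ep in edp; rewrite eq in edq.
have dp1 : 1 <= dp.
  case: dp edp {hdp} => [|dp] edp //; rewrite mul0n in edp.
  by move: hpq; rewrite edp -eq edp kap0 eqxx.
have dq1 : 1 <= dq.
  case: dq edq {hdq} => [|dq] edq //; rewrite mul0n in edq.
  by move: hpq; rewrite edq -ep edq kap0 eqxx.
have hm1 : 0 < m - 1 by lia.
have e1 : dq = maxn (dp-1) (m-dp) - minn (dp-1) (m-dp).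
  apply/eqP; rewrite -(eqn_pmul2r hm1) -kapd // -edp -edq eq //.
have e2 : dp = maxn (dq-1) (m-dq) - minn (dq-1) (m-dq).
  apply/eqP; rewrite -(eqn_pmul2r hm1) -kapd // -edq -edp ep //.
have ne : dp != dq by apply: contraNneq hpq => e; rewrite edp edq e.
have g1 := gcase m dp dp1 hdp; rewrite -e1 in g1.
have g2 := gcase m dq dq1 hdq; rewrite -e2 in g2.
move: e1 e2 => _ _.
have : (5 * dp = m + 1 /\ dq = 3 * dp) \/ (5 * dq = m + 1 /\ dp = 3 * dq).
  move/eqP: ne => ne.
  case: g1 => g1; case: g2 => g2.
  - by exfalso; apply: ne; lia.
  - by left; split; lia.
  - by right; split; lia.
  - by exfalso; lia.
case=> [[h1 h2]|[h1 h2]].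
- exists dp; split; first by lia.
  by right; rewrite edp edq h2.
- exists dq; split; first by lia.
  by left; rewrite edp edq h2.
Qed.

Lemma kitS m n x : kit m n.+1 x = kap m (kit m n x).
Proof. by rewrite /kit iterS. Qed.

Lemma from_fixed m x K : 2 <= m -> x < m ^ 2 -> fixed_set m x K -> size (undup K) = 2 ->
  exists p q, [/\ p != q, p < m ^ 2, q < m ^ 2, kap m p = q & kap m q = p] /\
    forall z, (z \in K) = (z == p) || (z == q).
Proof.
move=> hm hx [s [t [HS [[t0 [Ht Hmin]] ->]]]] hsz.
have hm0 : 0 < m by lia.
set p := kit m s x; set q := kit m (s + 1) x.
have eq1 : kap m p = q by rewrite /q addn1 kitS.
case: t t0 Ht Hmin hsz => [|[|t]] // _ Ht Hmin hsz.
have pq : p != q by apply/eqP => e; apply: (Hmin 1) => //; rewrite -/q e.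
have memK : forall z, z \in [seq kit m (s + i) x | i <- iota 0 t.+2] -> (z == p) || (z == q).
  move=> z hz; apply/negPn/negP => hz'.
  have u : uniq [:: p; q; z].
    rewrite /= inE negb_or pq /= inE andbT; move: hz'; rewrite negb_or => /andP [a b].
    by rewrite inE eq_sym a eq_sym b.
  have := uniq_leq_size u (s2 := undup [seq kit m (s + i) x | i <- iota 0 t.+2]).
  rewrite hsz => H; suff : 3 <= 2 by [].
  apply: H => w hw; rewrite mem_undup; rewrite !inE in hw.
  case/or3P: hw => /eqP ->.
  - by apply/mapP; exists 0; rewrite ?addn0.
  - by apply/mapP; exists 1.
  - exact hz.
have eq2 : kap m q = p.
  case: t Ht Hmin memK hsz => [|t] Ht Hmin memK hsz.
    by rewrite /q -kitS -addnS Ht.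
  have rK : kap m q \in [seq kit m (s + i) x | i <- iota 0 t.+3].
    apply/mapP; exists 2; first by rewrite mem_iota.
    by rewrite /q -kitS; congr kit; lia.
  case/orP: (memK _ rK) => /eqP e //.
  exfalso.
  have all_q : forall i, kit m (s + i.+1) x = q.
    elim=> [|i IH]; first by rewrite addn1.
    by rewrite addnS kitS IH e.
  by move: pq; rewrite /p -Ht all_q eqxx.
exists p, q; split; first by split => //; exact: kit_lt.
move=> z; apply/idP/idP; first exact: memK.
case/orP=> /eqP ->.
- by apply/mapP; exists 0; rewrite ?addn0.
- by apply/mapP; exists 1.
Qed.

Theorem lemma3p3p4 (m : nat) (hm : 2 <= m) :
  ((exists x K, x < m ^ 2 /\ fixed_set m x K /\ size (undup K) = 2)
     <-> 5 %| m + 1)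
  /\
  (forall x y K L, x < m ^ 2 -> y < m ^ 2 ->
     fixed_set m x K -> fixed_set m y L ->
     size (undup K) = 2 -> size (undup L) = 2 -> K =i L).
Proof.
split; [split|].
- move=> [x [K [hx [hK hs]]]].
  have [p [q [[pq hp hq e1 e2] _]]] := from_fixed m x K hm hx hK hs.
  have [c [hc _]] := cyc m p q hm hp hq pq e1 e2.
  by rewrite hc dvdn_mulr.
- move=> /dvdnP [c hc].
  have c1 : 1 <= c by lia.
  have e1 : kap m (c * (m - 1)) = (3 * c) * (m - 1).
    have hc3 : c <= m - 1 by lia.
    rewrite kapd //; congr (_ * _).
    move: (gcase m c c1 hc3); move: (maxn (c-1) (m-c) - minn (c-1) (m-c)) => G [] g; lia.
  have e2 : kap m ((3 * c) * (m - 1)) = c * (m - 1).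
    have h31 : 1 <= 3 * c by lia.
    have hc3 : 3 * c <= m - 1 by lia.
    rewrite kapd //; congr (_ * _).
    move: (gcase m (3 * c) h31 hc3); move: (maxn (3 * c - 1) (m - 3 * c) - minn (3 * c - 1) (m - 3 * c)) => G [] g; lia.
  have ne : c * (m - 1) != (3 * c) * (m - 1).
    by rewrite eqn_pmul2r; [lia | lia].
  exists (c * (m - 1)), [seq kit m (0 + i) (c * (m - 1)) | i <- iota 0 2].
  split; first by rewrite expnS expn1; nia.
  split; last first.
    move: (ne); rewrite -e1 => ne'.
    by rewrite /= /kit /= inE (negbTE ne').
  exists 0, 2; split; last split => //.
  + split => //; exists 2; split => //; rewrite /kit /= e1 e2 //.
  + split => //; split; first by rewrite /kit /= e1 e2.
    move=> t' h1 h2; have -> : t' = 1 by lia.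
    by rewrite /kit /= e1; apply/eqP; rewrite eq_sym.
- move=> x y K L hx hy hK hL hsK hsL z.
  have [p [q [[pq hp hq e1 e2] mK]]] := from_fixed m x K hm hx hK hsK.
  have [p' [q' [[pq' hp' hq' e1' e2'] mL]]] := from_fixed m y L hm hy hL hsL.
  have [c [hc H]] := cyc m p q hm hp hq pq e1 e2.
  have [c' [hc' H']] := cyc m p' q' hm hp' hq' pq' e1' e2'.
  have cc : c' = c by lia.
  subst c'.
  rewrite mK mL.
  by case: H => [[-> ->]|[-> ->]]; case: H' => [[-> ->]|[-> ->]]; rewrite // orbC.
Qed.
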